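(* Let $0\le q<d$ and let $X\subset Y$ be bounded cubical sets in $\mathbb{R}^d$. Then $$|\beta_q(Y)-\beta_q(X)|\le \#Y-\#X.$$
   Context: An elementary interval is $[l,l+1]$ or $[l]=[l,l]$ with $l\in\mathbb{Z}$; an elementary cube in $\mathbb{R}^d$ is a product of $d$ elementary intervals, of dimension equal to the number of nondegenerate factors. A cubical set is a union of elementary cubes. For a cubical set $X$, $\#X$ is the number of elementary cubes (of all dimensions) contained in $X$. $C_k(X)$ is the free $\mathbb{Z}$-module on the $k$-dimensional elementary cubes contained in $X$, with the standard cubical boundary operator $\partial\widehat Q=\sum_{j=1}^k(-1)^{j-1}(\widehat{Q_j^+}-\widehat{Q_j^-})$ ($Q_j^\pm$ obtained by replacing the $j$-th nondegenerate factor $[l_j,l_j+1]$ by $[l_j+1]$, resp. $[l_j]$); $H_k(X)$ is its homology, and for bounded $X$, $\beta_k(X)$ is the rank of the free part of $H_k(X)$. *)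

(* Defs.v *)
From HB Require Import structures.
From mathcomp Require Import all_boot all_order all_algebra.
From mathcomp Require Import boolp classical_sets cardinality reals.
From mathcomp Require Import finmap.

Set Implicit Arguments.
Unset Strict Implicit.
Unset Printing Implicit Defensive.

Import Order.TTheory GRing.Theory Num.Theory.
Local Open Scope ring_scope.
Local Open Scope classical_set_scope.

(* An elementary interval is encoded as (l, b) : int * bool;
   b = true means [l, l+1], b = false means [l] = [l,l].
   An elementary cube in R^d is a product of d elementary intervals. *)
Definition cube (d : nat) := {ffun 'I_d -> int * bool}.

Definition cdim (d : nat) (Q : cube d) : nat := #|[set i | (Q i).2]|.

Definition realize (R : realType) (d : nat) (Q : cube d) : set ('I_d -> R) :=
  [set x | forall i : 'I_d,
     if (Q i).2 then ((Q i).1%:~R <= x i) && (x i <= ((Q i).1 + 1)%:~R)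
     else x i == (Q i).1%:~R].

Definition cubical (R : realType) (d : nat) (X : set ('I_d -> R)) : Prop :=
  exists F : set (cube d), X = \bigcup_(Q in F) @realize R d Q.

Definition bounded_set (R : realType) (d : nat) (X : set ('I_d -> R)) : Prop :=
  exists M : R, forall x, X x -> forall i, `|x i| <= M.

Definition cubes_of (R : realType) (d : nat) (X : set ('I_d -> R)) : {fset cube d} :=
  fset_set [set Q : cube d | @realize R d Q `<=` X].

Definition ncubes (R : realType) (d : nat) (X : set ('I_d -> R)) : nat :=
  #|` cubes_of X|%fset.

Definition kcubes (R : realType) (d : nat) (X : set ('I_d -> R)) (k : nat)
  : {fset cube d} :=
  [fset Q in cubes_of X | cdim Q == k]%fset.

Definition face_plus (d : nat) (Q : cube d) (i : 'I_d) : cube d :=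
  [ffun j => if j == i then (((Q i).1 + 1)%R, false) else Q j].
Definition face_minus (d : nat) (Q : cube d) (i : 'I_d) : cube d :=
  [ffun j => if j == i then ((Q i).1, false) else Q j].

(* coefficient of \hat P in the boundary of \hat Q:
   d \hat Q = sum_{j=1}^k (-1)^(j-1) (\hat{Q_j^+} - \hat{Q_j^-}), where the
   j-th nondegenerate factor sits at coordinate i, with j-1 = number of
   nondegenerate coordinates before i. *)
Definition bcoef (d : nat) (Q P : cube d) : int :=
  \sum_(i < d | (Q i).2)
     (-1) ^+ #|[set i' : 'I_d | (i' < i)%N && (Q i').2]|
       * ((P == face_plus Q i)%:R - (P == face_minus Q i)%:R).

(* A k-chain of X is a function c : cube d -> int supported on kcubes X k
   (an element of the free Z-module C_k(X)). *)
Definition is_chain (R : realType) (d : nat) (X : set ('I_d -> R)) (k : nat)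
  (c : cube d -> int) : Prop :=
  forall Q, Q \notin kcubes X k -> c Q = 0.

Definition bd (R : realType) (d : nat) (X : set ('I_d -> R)) (k : nat)
  (c : cube d -> int) : cube d -> int :=
  fun P => \sum_(Q <- kcubes X k) c Q * bcoef Q P.

Definition is_cycle (R : realType) (d : nat) (X : set ('I_d -> R)) (k : nat)
  (c : cube d -> int) : Prop :=
  is_chain X k c /\ forall P, bd X k c P = 0.

Definition is_boundary (R : realType) (d : nat) (X : set ('I_d -> R)) (k : nat)
  (c : cube d -> int) : Prop :=
  exists b : cube d -> int, is_chain X k.+1 b /\ forall P, bd X k.+1 b P = c P.

Definition indep_homology (R : realType) (d : nat) (X : set ('I_d -> R))
  (k r : nat) (v : 'I_r -> cube d -> int) : Prop :=
  (forall i, is_cycle X k (v i)) /\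
  forall a : 'I_r -> int,
    is_boundary X k (fun P => \sum_(i < r) a i * v i P) -> forall i, a i = 0.

(* beta_k(X): rank of the free part of H_k(X), i.e. the maximal number of
   Z-linearly independent elements of H_k(X) (bounded by dim C_k(X)). *)
Definition betti (R : realType) (d : nat) (X : set ('I_d -> R)) (k : nat) : nat :=
  \max_(r < (#|` kcubes X k|%fset).+1 |
          `[< exists v, @indep_homology R d X k r v >]) (r : nat).

(* Main.v *)
Require Import Defs.
From HB Require Import structures.
From mathcomp Require Import all_boot all_order all_algebra.
From mathcomp Require Import boolp classical_sets cardinality reals.
From mathcomp Require Import finmap ring zify.
Import Order.TTheory GRing.Theory Num.Theory.
Set Implicit Arguments.
Unset Strict Implicit.
Unset Printing Implicit Defensive.

Section Core.
Local Open Scope fset_scope.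
Local Open Scope ring_scope.
Variable d : nat.
Implicit Types (A B : {fset cube d}) (c : cube d -> int).

Definition chn A c := forall Q, Q \notin A -> c Q = 0.
Definition bdA A c (P : cube d) : int := \sum_(Q <- A) c Q * bcoef Q P.
Definition cyc A c := chn A c /\ forall P, bdA A c P = 0.
Definition bnd A B c := exists b, chn B b /\ forall P, bdA B b P = c P.
Definition ind A B r (v : 'I_r -> cube d -> int) :=
  (forall i, cyc A (v i)) /\
  forall a : 'I_r -> int, bnd A B (fun P => \sum_(i < r) a i * v i P) -> forall i, a i = 0.
Arguments ind A B r v : clear implicits.
Definition bet A B : nat :=
  \max_(r < (#|` A|).+1 | `[< exists v, ind A B r v >]) (r : nat).

Lemma betti_bet (R : realType) (X : set ('I_d -> R)) q :
  betti X q = bet (kcubes X q) (kcubes X q.+1).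
Proof. by []. Qed.

Lemma bet_spec A B : exists2 v, ind A B (bet A B) v & (bet A B <= #|` A|)%N.
Proof.
rewrite /bet.
have h0 : (0 < #|[pred r : 'I_(#|` A|).+1 | `[< exists v, ind A B r v >]]|)%N.
  apply/card_gt0P; exists ord0; rewrite inE; apply/asboolP.
  exists (fun _ _ => 0).
  by split=> [[]|a _ []].
case: (eq_bigmax_cond (fun r : 'I_(#|` A|).+1 => (r : nat)) h0) => r.
rewrite inE => /asboolP [v hv] ->.
by exists v => //; rewrite -ltnS.
Qed.

Lemma bet_ge A B r v : ind A B r v -> (r <= #|` A|)%N -> (r <= bet A B)%N.
Proof.
move=> hv hr; rewrite /bet.
have := @leq_bigmax_cond _ (fun r : 'I_(#|` A|).+1 => `[< exists v, ind A B r v >])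
   (fun r => (r : nat)) (Ordinal (hr : (r < (#|` A|).+1)%N)).
by apply; apply/asboolP; exists v.
Qed.

Lemma bet_le0 A1 B1 A2 B2 :
  (forall r v, ind A1 B1 r v -> exists w, ind A2 B2 r w) ->
  (#|` A1| <= #|` A2|)%N -> (bet A1 B1 <= bet A2 B2)%N.
Proof.
move=> h hA; case: (bet_spec A1 B1) => v hv hb.
case: (h _ _ hv) => w hw; apply: (bet_ge hw); exact: leq_trans hA.
Qed.

Lemma ind0 A B (w : 'I_0 -> cube d -> int) : ind A B 0 w.
Proof. by split=> [[]|a _ []]. Qed.

Lemma bet_le1 A1 B1 A2 B2 :
  (forall r v, ind A1 B1 r.+1 v -> exists w, ind A2 B2 r w) ->
  (#|` A1| <= (#|` A2|).+1)%N -> (bet A1 B1 <= (bet A2 B2).+1)%N.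
Proof.
move=> h hA; case: (bet_spec A1 B1) => v hv hb.
move: v hv hb; case: (bet A1 B1) => // r v hv hb.
case: (h _ _ hv) => w hw; rewrite ltnS; apply: (bet_ge hw).
by rewrite -ltnS; exact: leq_trans hA.
Qed.

Lemma bdA_lin A (x y : int) f g P :
  bdA A (fun Q => x * f Q + y * g Q) P = x * bdA A f P + y * bdA A g P.
Proof.
rewrite /bdA !mulr_sumr -big_split /=; apply: eq_bigr => Q _; ring.
Qed.

Lemma bdAU1 A Q c P : Q \notin A -> bdA (Q |` A) c P = c Q * bcoef Q P + bdA A c P.
Proof. by move=> hQ; rewrite /bdA big_fsetU1. Qed.

Lemma bdA_ext A c c' P : {in A, c =1 c'} -> bdA A c P = bdA A c' P.
Proof. by move=> h; rewrite /bdA; apply: eq_big_seq => Q /h ->. Qed.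

Lemma chnU1 A Q c : chn A c -> chn (Q |` A) c.
Proof. by move=> h P; rewrite !inE negb_or => /andP [_ /h]. Qed.

Lemma chnU1_0 A Q c : chn (Q |` A) c -> c Q = 0 -> chn A c.
Proof.
move=> h h0 P hP; case: (eqVneq P Q) => [->//|hne].
by apply: h; rewrite !inE negb_or hne.
Qed.

Lemma sum_lift r (j : 'I_r.+1) (F : 'I_r.+1 -> int) :
  \sum_(k < r.+1) F k = F j + \sum_(i < r) F (lift j i).
Proof. by rewrite (bigD1_ord j). Qed.

Definition extv r (j : 'I_r.+1) (x : int) (a : 'I_r -> int) (k : 'I_r.+1) : int :=
  if unlift j k is Some i then a i else x.

Lemma extv_j r j x a : @extv r j x a j = x.
Proof. by rewrite /extv unlift_none. Qed.

Lemma extv_lift r j x a i : @extv r j x a (lift j i) = a i.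
Proof. by rewrite /extv liftK. Qed.

Lemma ind_drop A B r v (j : 'I_r.+1) :
  ind A B r.+1 v -> ind A B r (fun i => v (lift j i)).
Proof.
move=> [hc hi]; split=> [i|a ha i]; first exact: hc.
have := hi (extv j 0 a); rewrite -(extv_lift j 0 a i); apply.
case: ha => b [hb hbe]; exists b; split=> // P; rewrite hbe (sum_lift j) extv_j mul0r add0r.
by apply: eq_bigr => k _; rewrite extv_lift.
Qed.

Lemma caseA1 A B Q r v : Q \notin A -> ind A B r v -> ind (Q |` A) B r v.
Proof.
move=> hQ [hc hi]; split=> // i; case: (hc i) => hch hbd; split; first exact: chnU1.
by move=> P; rewrite bdAU1 // (hch Q hQ) mul0r add0r.
Qed.

Lemma cycU1_0 A Q c : Q \notin A -> cyc (Q |` A) c -> c Q = 0 -> cyc A c.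
Proof.
move=> hQ [hch hbd] h0; split; first exact: chnU1_0 hch h0.
by move=> P; have := hbd P; rewrite bdAU1 // h0 mul0r add0r.
Qed.

Lemma caseA2 A B Q r v : Q \notin A -> ind (Q |` A) B r.+1 v -> exists w, ind A B r w.
Proof.
move=> hQ [hc hi].
case: (boolP [forall k, v k Q == 0]) => [/forallP h0|].
  exists (fun i => v (lift ord0 i)); apply: ind_drop; split=> // i.
  apply: (cycU1_0 hQ (hc i)); exact/eqP/h0.
rewrite negb_forall => /existsP [j hj].
set n := v j Q.
exists (fun i P => n * v (lift j i) P + (- v (lift j i) Q) * v j P); split.
  move=> i; have hw0 : n * v (lift j i) Q + (- v (lift j i) Q) * v j Q = 0.
    by rewrite /n; ring.
  apply: (cycU1_0 hQ) => //; split.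
    move=> P hP; have [hc1 _] := hc (lift j i); have [hc2 _] := hc j.
    by rewrite (hc1 P hP) (hc2 P hP); ring.
  move=> P; rewrite bdA_lin; have [_ h1] := hc (lift j i); have [_ h2] := hc j.
  by rewrite h1 h2; ring.
move=> c hcb i.
have := hi (extv j (- \sum_(i < r) c i * v (lift j i) Q) (fun i => c i * n)).
move=> /(_ _ (lift j i)); rewrite extv_lift => h.
have /eqP : c i * n = 0.
  apply: h; case: hcb => b [hb hbe]; exists b; split=> // P; rewrite hbe.
  symmetry; rewrite (sum_lift j) extv_j; under [X in _ + X = _]eq_bigr do rewrite extv_lift.
  transitivity (\sum_(i < r) (c i * n * v (lift j i) P + (- (c i * v (lift j i) Q)) * v j P)).
    by rewrite [RHS]big_split /= addrC -mulr_suml sumrN.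
  by apply: eq_bigr => k _; ring.
by rewrite mulf_eq0 (negbTE hj) orbF => /eqP.
Qed.

Lemma bndU1 A B Q c : Q \notin B -> bnd A (Q |` B) c ->
  exists m b, chn B b /\ forall P, c P = m * bcoef Q P + bdA B b P.
Proof.
move=> hQ [b [hb hc]]; exists (b Q), (fun P => if P == Q then 0 else b P); split.
  move=> P hP; case: eqP => // hne; apply: hb; by rewrite !inE negb_or hP andbT; apply/eqP.
move=> P; rewrite -hc bdAU1 //; congr (_ + _); apply: bdA_ext => P' hP'.
by case: eqP => // e; move: hQ; rewrite -e hP'.
Qed.

Lemma bnd_U1 A B Q c : Q \notin B -> bnd A B c -> bnd A (Q |` B) c.
Proof.
move=> hQ [b [hb hc]]; exists b; split; first exact: chnU1.
by move=> P; rewrite bdAU1 // (hb Q hQ) mul0r add0r.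
Qed.

Lemma caseB1 A B Q r v : Q \notin B -> ind A (Q |` B) r v -> ind A B r v.
Proof. by move=> hQ [hc hi]; split=> // a /(bnd_U1 hQ); apply: hi. Qed.

Lemma caseB2 A B Q r v : Q \notin B -> ind A B r.+1 v -> exists w, ind A (Q |` B) r w.
Proof.
move=> hQ [hc hi].
case: (pselect (forall a : 'I_r.+1 -> int,
   bnd A (Q |` B) (fun P => \sum_(i < r.+1) a i * v i P) -> forall i, a i = 0)) => hall.
  by exists (fun i => v (lift ord0 i)); apply: ind_drop; split.
move/existsNP: hall => [a /not_implyP [ha /existsNP [j hj]]].
have [m [b [hb hab]]] := bndU1 hQ ha.
have hm : m != 0.
  apply/eqP => hm0; apply: hj; apply: hi; exists b; split=> // P.
  by rewrite hab hm0 mul0r add0r.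
exists (fun i => v (lift j i)); split=> // c hcb i.
have [m' [b' [hb' hcb']]] := bndU1 hQ hcb.
set e := extv j (- m' * a j) (fun i => m * c i - m' * a (lift j i)).
have key : forall P, \sum_(k < r.+1) e k * v k P =
   m * (\sum_(i < r) c i * v (lift j i) P) - m' * (\sum_(k < r.+1) a k * v k P).
  move=> P; rewrite (sum_lift j) [X in _ = _ - m' * X](sum_lift j) /e extv_j.
  under eq_bigr do rewrite extv_lift.
  rewrite mulrDr opprD !mulr_sumr -sumrN addrCA -big_split /=.
  congr (_ + _); first ring.
  by apply: eq_bigr => k _; ring.
have he : forall k, e k = 0.
  apply: hi; exists (fun x => m * b' x + (- m') * b x); split.
    by move=> P hP; rewrite (hb P hP) (hb' P hP); ring.
  by move=> P; rewrite bdA_lin key hcb' hab; ring.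
have hm' : m' = 0.
  have := he j; rewrite /e extv_j => /eqP; rewrite mulf_eq0 => /orP [|/eqP //].
  by rewrite oppr_eq0 => /eqP.
have := he (lift j i); rewrite /e extv_lift hm' mul0r subr0 => /eqP.
by rewrite mulf_eq0 (negbTE hm) => /eqP.
Qed.

Definition kc (F : {fset cube d}) k : {fset cube d} := [fset P in F | cdim P == k].
Definition BF F q := bet (kc F q) (kc F q.+1).

Lemma kcU1 F Q k :
  kc (Q |` F) k = if cdim Q == k then Q |` kc F k else kc F k.
Proof.
apply/fsetP => P; rewrite !inE; case: (eqVneq P Q) => [->|hne] /=.
  by case: ifP => h; rewrite !inE ?eqxx ?h //= andbF.
by case: ifP => h; rewrite !inE ?(negbTE hne).
Qed.

Lemma kc_notin F Q k : Q \notin F -> Q \notin kc F k.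
Proof. by move=> h; rewrite !inE negb_and h. Qed.

Lemma step F Q q : Q \notin F ->
  (BF F q <= (BF (Q |` F) q).+1)%N /\ (BF (Q |` F) q <= (BF F q).+1)%N.
Proof.
move=> hQ; rewrite /BF !kcU1.
have hA := kc_notin q hQ; have hB := kc_notin q.+1 hQ.
case: (eqVneq (cdim Q) q) => [e|ne].
  have -> : (cdim Q == q.+1) = false by rewrite e; elim q.
  split.
    apply: leqW; apply: bet_le0; first by move=> r v /(caseA1 hA) h; exists v.
    by rewrite cardfsU1 hA leqW.
  apply: bet_le1; first by move=> r v /(caseA2 hA).
  by rewrite cardfsU1 hA.
case: ifP => _.
  split.
    apply: bet_le1; first by move=> r v /(caseB2 hB).
    exact: leqW.
  apply: leqW; apply: bet_le0 => //; by move=> r v /(caseB1 hB) h; exists v.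
by split; apply: leqW.
Qed.

Lemma induc q n : forall S T : {fset cube d}, S `<=` T -> (#|` T| - #|` S| = n)%N ->
  (BF T q <= BF S q + n)%N /\ (BF S q <= BF T q + n)%N.
Proof.
elim: n => [|n IH] S T hST hn.
  have : S == T.
    have := fsubset_leqif_cards hST; rewrite /Order.leif => -[_ <-].
    by rewrite eqn_leq fsubset_leq_card //=; apply/eqP; move: hn => /eqP; rewrite subn_eq0 => /eqP ->.
  by move/eqP ->; rewrite addn0.
have : ~~ (T `<=` S).
  apply/negP => hTS; have := fsubset_leq_card hTS; move: hn; lia.
case/fsubsetPn => Q hQT hQS.
have hST' : Q |` S `<=` T by rewrite fsubUset fsub1set hQT hST.
have hn' : (#|` T| - #|` Q |` S| = n)%N by rewrite cardfsU1 hQS; move: hn; lia.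
have [h1 h2] := IH _ _ hST' hn'.
have [h3 h4] := step q hQS.
lia.
Qed.

End Core.
Arguments ind {d} A B r v.

Unset Implicit Arguments.
Section Geo.
Local Open Scope fset_scope.
Local Open Scope ring_scope.
Local Open Scope classical_set_scope.

Lemma cubes_fin (R : realType) d (X : set ('I_d -> R)) :
  bounded_set X -> finite_set [set Q : cube d | @realize R d Q `<=` X].
Proof.
case=> M hM.
set N := Num.Def.archi_bound `|M|.
have hN : `|M| < N%:R by apply: archi_boundP.
pose f (g : {ffun 'I_d -> 'I_(N + N).+1 * bool}) : cube d :=
  [ffun i => (((g i).1 : nat)%:Z - N%:Z, (g i).2)].
apply: (@sub_finite_set _ _ (f @` setT)); last exact: finite_image finite_finset.
move=> Q /= hQ.
have hl : forall i, (absz (Q i).1 < N)%N.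
  move=> i.
  have hx : X (fun i => ((Q i).1)%:~R).
    apply: hQ => j; case: ((Q j).2); last by [].
    by rewrite lexx /= ler_int lerDl.
  have := hM _ hx i; rewrite -intr_norm => h1.
  rewrite -(ltr_nat R); apply: le_lt_trans hN.
  apply: le_trans (ler_norm M); apply: le_trans h1.
  by rewrite natr_absz intr_norm.
exists [ffun i => (inord (absz ((Q i).1 + N%:Z)), (Q i).2)] => //.
apply/ffunP => i; rewrite !ffunE /= inordK.
  have := hl i; case: (Q i) => l b /= hli; congr (_, _).
  lia.
have := hl i; case: (Q i) => l b /= hli; lia.
Qed.

Lemma cubes_sub (R : realType) d (X Y : set ('I_d -> R)) :
  bounded_set Y -> X `<=` Y -> (cubes_of X `<=` cubes_of Y)%fset.
Proof.
move=> hY hXY; have fY := @cubes_fin R d Y hY.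
have fX : finite_set [set Q : cube d | @realize R d Q `<=` X].
  by apply: sub_finite_set fY => Q /= h z /h /hXY.
apply/fsubsetP => Q; rewrite /cubes_of in_fset_set // in_fset_set //.
move=> /set_mem h; apply/mem_set => z /h /hXY //.
Qed.

End Geo.

Local Open Scope ring_scope.
Local Open Scope classical_set_scope.

Theorem lemma3p1 (R : realType) (d q : nat) (X Y : set ('I_d -> R)) :
  (q < d)%N ->
  cubical X -> cubical Y -> bounded_set X -> bounded_set Y ->
  X `<=` Y ->
  `|((betti Y q)%:Z - (betti X q)%:Z)%R| <= (ncubes Y)%:Z - (ncubes X)%:Z.
Proof.
move=> _ _ _ hX hY hXY.
have hS := @cubes_sub R d X Y hY hXY.
have hc := fsubset_leq_card hS.
have [h1 h2] := induc q hS (erefl (#|` cubes_of Y| - #|` cubes_of X|)%N).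
have -> : betti Y q = BF (cubes_of Y) q by [].
have -> : betti X q = BF (cubes_of X) q by [].
rewrite /ncubes ler_norml; apply/andP; split; lia.
Qed.
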